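(* Let $\mathcal{A}=\{H_1,\dots,H_n\}$ be an arrangement of affine lines in $\mathbb{R}^2$, fix a flag $\mathcal{F}$ adapted to $\mathcal{A}$ and the associated numbering, chambers $C_0,\dots,C_n$, maps $\nabla_\eta$, bands, $\eta$-resonant bands, $\widetilde{\nabla}_\eta$ and $\widetilde{U}_1$ as described in the context. Let $R$ be a commutative ring, let $a_1,\dots,a_n\in R$ (i.e. $\eta=\sum_{i=1}^n a_ie_i\in A^1_R(\mathcal{A})$), and put $\alpha:=\sum_{i=1}^n a_i$. (i) If $\alpha$ is invertible in $R$, then $\widetilde{U}_1\colon \operatorname{Ker}(\widetilde{\nabla}_\eta)\to H^1(R[\mathsf{ch}_{\mathcal{F}}^\bullet(\mathcal{A})],\nabla_\eta)$ is injective. (ii) If $R$ is an integral domain and $\alpha$ is invertible in $R$, then $\widetilde{U}_1$ is an isomorphism. (iii) If $R$ is an arbitrary commutative ring, $\alpha$ is invertible in $R$, and every band of $\mathcal{A}$ is $\eta$-resonant, then $\widetilde{U}_1$ is an isomorphism.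
   Context: Chambers of $\mathcal{A}$ are the connected components of $\mathbb{R}^2\setminus\bigcup_i H_i$; for chambers $C,C'$, $\operatorname{Sep}(C,C')$ is the set of lines of $\mathcal{A}$ having $C$ and $C'$ on opposite sides. A flag $\mathcal{F}^0\subset\mathcal{F}^1\subset\mathbb{R}^2$ (a point in an oriented line) is adapted to $\mathcal{A}$ if: $\mathcal{F}^0$ lies on no $H_i$; $\mathcal{F}^1$ meets $\bigcup H_i$ in $n$ distinct points; $\mathcal{F}^0$ does not separate these $n$ points inside $\mathcal{F}^1$; and $\mathcal{F}^1$ does not separate the intersection points of lines of $\mathcal{A}$ (they all lie on one side of $\mathcal{F}^1$). Let $H_i^-$ be the open half plane of $H_i$ containing $\mathcal{F}^0$ and $H_i^+$ the other one; number the lines so that $\mathcal{F}^0<H_1\cap\mathcal{F}^1<\dots<H_n\cap\mathcal{F}^1$ along the oriented $\mathcal{F}^1$. Let $\mathsf{ch}^0_{\mathcal{F}}=\{C_0\}$ ($C_0$ the chamber containing $\mathcal{F}^0$), $\mathsf{ch}^1_{\mathcal{F}}=\{C_1,\dots,C_n\}$ the chambers meeting $\mathcal{F}^1$ but not $\mathcal{F}^0$, where $C_i=H_1^+\cap\dots\cap H_i^+\cap H_{i+1}^-\cap\dots\cap H_n^-$, and $\mathsf{ch}^2_{\mathcal{F}}$ the chambers not meeting $\mathcal{F}^1$. $R[\mathsf{ch}^i_{\mathcal{F}}]$ denotes the free $R$-module on $\mathsf{ch}^i_{\mathcal{F}}$. Define $\nabla_\eta\colon R[\mathsf{ch}^0_{\mathcal{F}}]\to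 R[\mathsf{ch}^1_{\mathcal{F}}]$ by $\nabla_\eta[C_0]=\sum_{i=1}^n(a_1+\dots+a_i)[C_i]$. Define $\deg(C_i,D)$ for $D\in\mathsf{ch}^2_{\mathcal{F}}$: for $i<n$, $\deg=1$ if $D\subset H_i^-\cap H_{i+1}^+$, $-1$ if $D\subset H_i^+\cap H_{i+1}^-$, $0$ otherwise; $\deg(C_n,D)=-1$ if $D\subset H_n^+$ and $0$ otherwise. Define $\nabla_\eta\colon R[\mathsf{ch}^1_{\mathcal{F}}]\to R[\mathsf{ch}^2_{\mathcal{F}}]$ by $\nabla_\eta[C]=\sum_{D}\deg(C,D)\big(\sum_{H_i\in\operatorname{Sep}(C,D)}a_i\big)[D]$. It is known that $(R[\mathsf{ch}^\bullet_{\mathcal{F}}],\nabla_\eta)$ is a cochain complex (isomorphic to the Aomoto complex $(A^\bullet_R(\mathcal{A}),\eta)$ of the Orlik–Solomon algebra); $H^1$ denotes its first cohomology. A band $B$ is the region between two parallel lines $H_i,H_{i+1}$ that are consecutive in the numbering. It contains exactly two unbounded chambers: $U_1(B)=C_i$ (meeting $\mathcal{F}^1$) and $U_2(B)\in\mathsf{ch}^2_{\mathcal{F}}$. $B$ is $\eta$-resonant if $\sum_{H_j\in\operatorname{Sep}(U_1(B),U_2(B))}a_j=0$; $\operatorname{RB}_\eta(\mathcal{A})$ is the set of $\eta$-resonant bands. Define $\widetilde{\nabla}_\eta\colon R[\operatorname{RB}_\eta(\mathcal{A})]\to R[\mathsf{ch}^2_{\mathcal{F}}]$ by $\widetilde{\nabla}_\eta[B]=-\nabla_\eta[U_1(B)]$,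 and $\widetilde{U}_1\colon\operatorname{Ker}(\widetilde{\nabla}_\eta)\to H^1(R[\mathsf{ch}^\bullet_{\mathcal{F}}],\nabla_\eta)$ by $\sum r_B[B]\mapsto$ the class of $\sum r_B[U_1(B)]$. *)

(* Defs.v *)
From HB Require Import structures.
From mathcomp Require Import all_boot all_order all_algebra.
From mathcomp Require Import boolp reals.
Set Implicit Arguments. Unset Strict Implicit. Unset Printing Implicit Defensive.
Import Order.TTheory GRing.Theory Num.Theory.
Local Open Scope ring_scope.

(* The arrangement H_1..H_n is given 0-based: lines L 0, ..., L (n-1).  *)

Definition pt (Rl : realType) := (Rl * Rl)%type.
Definition lineq (Rl : realType) := (Rl * Rl * Rl)%type.

Section Geometry.
Variable Rl : realType.

Definition evl (l : lineq Rl) (x : pt Rl) : Rl := l.1.1 * x.1 + l.1.2 * x.2 + l.2.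
Definition is_line (l : lineq Rl) : Prop := (l.1.1, l.1.2) != (0, 0).
Definition onH (l : lineq Rl) (x : pt Rl) : Prop := evl l x = 0.

(* The oriented line F^1 = { p + t v | t }, oriented by v; F^0 = p. *)
Definition onF1 (p v : pt Rl) (t : Rl) : pt Rl := (p.1 + t * v.1, p.2 + t * v.2).
(* A linear form vanishing exactly on F^1 (its two sides are g>0, g<0). *)
Definition gF1 (p v : pt Rl) (x : pt Rl) : Rl := v.2 * (x.1 - p.1) - v.1 * (x.2 - p.2).

Variables (n : nat) (L : nat -> lineq Rl) (p v : pt Rl).

(* The flag (p in the oriented line F^1) is adapted to the arrangement,
   and the lines are numbered so that F^0 < H_1 cap F^1 < ... < H_n cap F^1
   along the oriented F^1 (t j is the parameter of H_(j+1) cap F^1). *)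
Definition adapted : Prop :=
  [/\ v != (0, 0),
      (forall j, (j < n)%N -> is_line (L j)),
      (forall j, (j < n)%N -> evl (L j) p != 0),
      (exists t : nat -> Rl,
         [/\ (forall j s, (j < n)%N -> (onH (L j) (onF1 p v s) <-> s = t j)),
             (forall j k, (j < k)%N -> (k < n)%N -> t j < t k) &
             (forall j, (j < n)%N -> 0 < t j)]) &
      (forall j k x, (j < n)%N -> (k < n)%N -> j != k ->
         onH (L j) x -> onH (L k) x -> 0 < gF1 p v x) \/
      (forall j k x, (j < n)%N -> (k < n)%N -> j != k ->
         onH (L j) x -> onH (L k) x -> gF1 p v x < 0)].

(* H_j^+ : open half plane of H_j not containing F^0 = p;
   H_j^- : the one containing p. *)
Definition Hplus (j : nat) (x : pt Rl) : Prop := evl (L j) x * evl (L j) p < 0.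
Definition Hminus (j : nat) (x : pt Rl) : Prop := 0 < evl (L j) x * evl (L j) p.

(* Sign vectors: s_j = true means "on the H_j^+ side". *)
Definition sv := (n.-tuple bool).
Definition sg (s : sv) (j : nat) : bool := nth false s j.

Definition region (s : sv) (x : pt Rl) : Prop :=
  forall j, (j < n)%N -> if sg s j then Hplus j x else Hminus j x.

(* Chambers = connected components of the complement, represented by the
   (nonempty) cells they are, indexed by their sign vectors. *)
Definition chamber (s : sv) : Prop := exists x, region s x.
Definition meetsF1 (s : sv) : Prop := exists t, region s (onF1 p v t).
Definition meetsF0 (s : sv) : Prop := region s p.

Definition ch1 (s : sv) : Prop := [/\ chamber s, meetsF1 s & ~ meetsF0 s].
Definition ch2 (s : sv) : Prop := chamber s /\ ~ meetsF1 s.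

(* Cc k (k = 0..n-1) is the chamber C_(k+1) = H_1^+ .. H_(k+1)^+ H_(k+2)^- .. H_n^- *)
Definition Cc (k : nat) : sv := [tuple (i <= k)%N | i < n].

Definition parallel (l l' : lineq Rl) : Prop := ~ exists x, onH l x /\ onH l' x.
Definition is_band (k : nat) : Prop := (k.+1 < n)%N /\ parallel (L k) (L k.+1).
(* open strip between H_(k+1) and H_(k+2) (0-based lines k and k+1) *)
Definition inband (k : nat) (x : pt Rl) : Prop :=
  forall y z, onH (L k.+1) y -> onH (L k) z ->
    0 < evl (L k) x * evl (L k) y /\ 0 < evl (L k.+1) x * evl (L k.+1) z.
Definition unbounded (S : pt Rl -> Prop) : Prop :=
  forall M : Rl, exists x, S x /\ M < `|x.1| + `|x.2|.
(* U_2(B): the unbounded chamber of the band other than U_1(B) = C_(k+1). *)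
Definition isU2 (k : nat) (s : sv) : Prop :=
  [/\ chamber s, (forall x, region s x -> inband k x), unbounded (region s)
    & s != Cc k].
Definition U2 (k : nat) : sv := odflt (Cc k) [pick s : sv | `[< isU2 k s >] ].

(* R[ch^0] = R (free on {C_0});  R[ch^i] (i = 1, 2) = functions        *)
(* sv -> R supported on ch^i.                                          *)
Variables (R : comPzRingType) (a : nat -> R).  (* a j = a_(j+1) *)

Definition sepsum (C D : sv) : R := \sum_(j < n | sg C j != sg D j) a j.

Definition degk (k : nat) (D : sv) : R :=
  if (k.+1 < n)%N then
    (if ~~ sg D k && sg D k.+1 then 1
     else if sg D k && ~~ sg D k.+1 then -1 else 0)
  else (if sg D k then -1 else 0).

Definition degC (C D : sv) : R := \sum_(k < n) (C == Cc k)%:R * degk k D.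

Definition nabla0 (x : R) : sv -> R :=
  fun C => \sum_(k < n) (C == Cc k)%:R * (x * \sum_(j < n | (j <= k)%N) a j).

Definition nabla1 (c : sv -> R) : sv -> R :=
  fun D => if `[< ch2 D >] then
             \sum_(C : sv | `[< ch1 C >]) c C * degC C D * sepsum C D
           else 0.

Definition delta (C : sv) : sv -> R := fun D => (D == C)%:R.

Definition resonant (k : nat) : Prop := is_band k /\ sepsum (Cc k) (U2 k) = 0.

Definition nablat (k : nat) : sv -> R := fun D => - nabla1 (delta (Cc k)) D.

(* elements of R[RB_eta] are r : nat -> R supported on resonant bands *)
Definition inKer (r : nat -> R) : Prop :=
  (forall k, ~ resonant k -> r k = 0) /\
  (forall D, \sum_(k < n) r k * nablat k D = 0).

Definition U1t (r : nat -> R) : sv -> R :=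
  fun C => \sum_(k < n) r k * delta (Cc k) C.

Definition cochain1 (c : sv -> R) : Prop := forall C, ~ ch1 C -> c C = 0.
Definition cocycle1 (c : sv -> R) : Prop := cochain1 c /\ forall D, nabla1 c D = 0.
Definition cohom (c c' : sv -> R) : Prop :=
  exists x : R, forall C, c C - c' C = nabla0 x C.

Definition U1t_welldef : Prop := forall r, inKer r -> cocycle1 (U1t r).
Definition U1t_injective : Prop :=
  forall r r', inKer r -> inKer r' -> cohom (U1t r) (U1t r') -> forall k, r k = r' k.
Definition U1t_surjective : Prop :=
  forall c, cocycle1 c -> exists r, inKer r /\ cohom (U1t r) c.

End Geometry.

(* Main.v *)
Require Import Defs.
From HB Require Import structures.
From mathcomp Require Import all_boot all_order all_algebra.
From mathcomp Require Import boolp reals.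
From mathcomp Require Import ring lra.
Import Order.TTheory GRing.Theory Num.Theory.
Local Open Scope ring_scope.

Lemma sgCc n k j : (j < n)%N -> sg (Cc n k) j = (j <= k)%N.
Proof.
move=> hj; rewrite /sg /Cc.
have -> : j = nat_of_ord (Ordinal hj) by [].
by rewrite nth_mktuple.
Qed.

Lemma sg_ge n (D : sv n) j : (n <= j)%N -> sg D j = false.
Proof. by move=> hj; rewrite /sg nth_default // size_tuple. Qed.

Section Alg.
Variables (n : nat) (R : comPzRingType) (a : nat -> R).

Definition Sp m := \sum_(0 <= j < m) a j.
Definition Qp (e : nat -> bool) m := \sum_(0 <= j < m) a j * (e j)%:R.

Lemma sum_lt (F : nat -> R) m : (m <= n)%N ->
  \sum_(j < n | (j < m)%N) F j = \sum_(0 <= j < m) F j.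
Proof. by move=> hm; rewrite (big_nat_widen 0 m n xpredT) // big_mkord. Qed.

Lemma S_Sp k : (k < n)%N -> \sum_(j < n | (j <= k)%N) a j = Sp k.+1.
Proof. by move=> hk; rewrite /Sp -(sum_lt a k.+1 hk). Qed.

Lemma degkE (D : sv n) k : (k < n)%N ->
  degk R k D = (sg D k.+1)%:R - (sg D k)%:R.
Proof.
move=> hk; rewrite /degk; case: ifP => hk1.
  by case: (sg D k); case: (sg D k.+1) => /=; rewrite ?subrr ?sub0r ?subr0.
have hn : n = k.+1 by apply/eqP; rewrite eqn_leq hk leqNgt hk1.
by rewrite (@sg_ge n D k.+1) ?hn //; case: (sg D k) => /=; rewrite ?subrr ?sub0r ?subr0.
Qed.

Lemma sepE (D : sv n) k : (k < n)%N ->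
  sepsum a (Cc n k) D = Sp k.+1 + Qp (sg D) n - 2%:R * Qp (sg D) k.+1.
Proof.
move=> hk; rewrite /sepsum big_mkcond.
have -> : \sum_(i < n) (if sg (Cc n k) i != sg D i then a i else 0) =
  \sum_(i < n) ((if (i < k.+1)%N then a i else 0) + a i * (sg D i)%:R
                 - 2%:R * (if (i < k.+1)%N then a i * (sg D i)%:R else 0)).
  apply: eq_bigr => i _; rewrite sgCc // ltnS.
  by case: (i <= k)%N; case: (sg D i) => /=; ring.
rewrite !big_split /= sumrN -mulr_sumr -!big_mkcond /=.
by rewrite !sum_lt // /Sp /Qp (sum_lt (fun i => a i * (sg D i)%:R)) // [\sum_(0 <= j < n) _]big_mkord.
Qed.

Lemma d2 (D : sv n) :
  \sum_(k < n) (\sum_(j < n | (j <= k)%N) a j) * degk R k D * sepsum a (Cc n k) D = 0.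
Proof.
set e := sg D.
set E := Qp e n.
have -> : \sum_(k < n) (\sum_(j < n | (j <= k)%N) a j) * degk R k D * sepsum a (Cc n k) D
  = \sum_(0 <= k < n) ((e k.+1)%:R - (e k)%:R) * (Sp k.+1 * (Sp k.+1 + E - 2%:R * Qp e k.+1)).
  rewrite big_mkord; apply: eq_bigr => k _.
  by rewrite S_Sp // degkE // sepE //; rewrite /E; ring.
pose g m := Sp m * (Sp m + E - 2%:R * Qp e m).
pose Th m := Qp e m * E - Qp e m ^+ 2.
pose f m := (e m)%:R * g m - Th m.
rewrite (telescope_sumr_eq f) //; last first.
  move=> k _; rewrite /f /g /Th /Sp /Qp !big_nat_recr //=.
  by case: (e k) => /=; ring.
rewrite /f /e sg_ge // /g /Th /Sp /Qp !(big_geq (leqnn 0)).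
rewrite /E /Qp /=; ring.
Qed.

End Alg.

Section Geo.
Variables (Rl : realType) (n : nat) (L : nat -> lineq Rl) (p v : pt Rl)
  (t : nat -> Rl) (sig : Rl).
Hypothesis hv : v != (0, 0).
Hypothesis hE : forall j, (j < n)%N -> evl (L j) p != 0.
Hypothesis ht1 : forall j s, (j < n)%N -> (onH (L j) (onF1 p v s) <-> s = t j).
Hypothesis ht2 : forall j k, (j < k)%N -> (k < n)%N -> t j < t k.
Hypothesis ht3 : forall j, (j < n)%N -> 0 < t j.
Hypothesis hsig : sig = 1 \/ sig = -1.
Hypothesis hvert : forall j k x, (j < n)%N -> (k < n)%N -> j != k ->
  onH (L j) x -> onH (L k) x -> 0 < sig * gF1 p v x.

Definition u : pt Rl := (sig * v.2, - (sig * v.1)).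
Definition Pt (s y : Rl) : pt Rl := (p.1 + s * v.1 + y * u.1, p.2 + s * v.2 + y * u.2).
Definition E j := evl (L j) p.
Definition mm j := (L j).1.1 * v.1 + (L j).1.2 * v.2.
Definition qq j := (L j).1.1 * u.1 + (L j).1.2 * u.2.
Definition mu j := qq j * t j / E j.
Definition N2 := v.1 ^+ 2 + v.2 ^+ 2.

Lemma N2_gt0 : 0 < N2.
Proof.
move: hv; rewrite /N2; case: v => v1 v2 /=; rewrite xpair_eqE negb_and => /orP[] h.
  have := sqr_ge0 v2; have : 0 < v1 ^+ 2 by rewrite exprn_even_gt0. lra.
have := sqr_ge0 v1; have : 0 < v2 ^+ 2 by rewrite exprn_even_gt0. lra.
Qed.

Lemma evl_Pt j s y : evl (L j) (Pt s y) = E j + s * mm j + y * qq j.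
Proof. by rewrite /E /Pt /mm /qq /evl /=; ring. Qed.

Lemma onF1_Pt s : onF1 p v s = Pt s 0.
Proof. by rewrite /onF1 /Pt !mul0r !addr0. Qed.

Lemma tne0 j : (j < n)%N -> t j != 0.
Proof. by move=> hj; have := ht3 j hj; rewrite lt0r => /andP[]. Qed.

Lemma Emm j : (j < n)%N -> mm j = - E j / t j.
Proof.
move=> hj; have := (ht1 j (t j) hj).2 erefl.
rewrite /onH onF1_Pt evl_Pt mul0r addr0 => h.
have ht := tne0 j hj.
have e1 : t j * mm j = - E j by lra.
by rewrite -e1 mulrAC mulfV // mul1r.
Qed.


Lemma key j s y : (j < n)%N ->
  evl (L j) (Pt s y) * E j = (E j ^+ 2 / t j) * (t j + mu j * y - s).
Proof.
move=> hj; have ht := tne0 j hj; have he : E j != 0 := hE j hj.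
rewrite evl_Pt (Emm j hj) /mu; field.
by rewrite ht he.
Qed.

Lemma coef_gt0 j : (j < n)%N -> 0 < E j ^+ 2 / t j.
Proof.
move=> hj; apply: divr_gt0; last exact: ht3.
by rewrite exprn_even_gt0 //; apply: hE.
Qed.

Lemma HplusP j s y : (j < n)%N -> Hplus L p j (Pt s y) <-> t j + mu j * y < s.
Proof.
move=> hj; rewrite /Hplus -/(E j) (key j s y hj) pmulr_rlt0 ?(coef_gt0 j hj) // subr_lt0.
by split.
Qed.

Lemma HminusP j s y : (j < n)%N -> Hminus L p j (Pt s y) <-> s < t j + mu j * y.
Proof.
move=> hj; rewrite /Hminus -/(E j) (key j s y hj) pmulr_rgt0 ?(coef_gt0 j hj) // subr_gt0.
by split.
Qed.

Lemma onHP j s y : (j < n)%N -> onH (L j) (Pt s y) <-> s = t j + mu j * y.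
Proof.
move=> hj; have hc := coef_gt0 j hj; split.
  move=> h; have := key j s y hj; rewrite h mul0r => /esym/eqP.
  rewrite mulf_eq0 (gt_eqF hc) /= subr_eq0 => /eqP ->//.
move=> ->; have := key j (t j + mu j * y) y hj; rewrite subrr mulr0 => /eqP.
have he : E j != 0 := hE j hj.
by rewrite mulf_eq0 (negbTE he) orbF => /eqP.
Qed.

Lemma decomp x : exists s y, x = Pt s y.
Proof.
have hN := N2_gt0; have hN0 : N2 != 0 by rewrite gt_eqF.
exists (((x.1 - p.1) * v.1 + (x.2 - p.2) * v.2) / N2).
exists (sig * ((x.1 - p.1) * v.2 - (x.2 - p.2) * v.1) / N2).
move: hN0; rewrite /Pt /u /N2; case: x => x1 x2; case: p => p1 p2; case: v => v1 v2 /= hN0.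
by case: hsig => ->; congr pair; field.
Qed.

Lemma gF1_Pt s y : sig * gF1 p v (Pt s y) = y * N2.
Proof. by rewrite /gF1 /Pt /u /N2 /=; case: hsig => ->; ring. Qed.

Lemma t_le i j : (i <= j)%N -> (j < n)%N -> t i <= t j.
Proof.
rewrite leq_eqVlt => /orP[/eqP -> //|hij] hj.
by apply/ltW/ht2.
Qed.

Lemma mu_noninc i j : (i < j)%N -> (j < n)%N -> mu j <= mu i.
Proof.
move=> hij hj; have hi : (i < n)%N by apply: ltn_trans hj.
rewrite leNgt; apply/negP => hlt.
have hd : mu i - mu j != 0 by rewrite subr_eq0 lt_eqF.
set y0 := (t j - t i) / (mu i - mu j).
have ey : y0 * (mu i - mu j) = t j - t i by rewrite /y0 mulfVK.
have tij := ht2 i j hij hj.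
have hy : y0 < 0.
  rewrite ltNge; apply/negP => hy.
  have : y0 * (mu i - mu j) <= 0 by rewrite mulr_ge0_le0 // subr_le0 ltW.
  lra.
have := @hvert i j (Pt (t i + mu i * y0) y0) hi hj (negbT (ltn_eqF hij)).
have h2 : t i + mu i * y0 = t j + mu j * y0.
  move: ey; rewrite mulrBr => ey; lra.
rewrite !onHP // gF1_Pt => /(_ erefl h2).
have := N2_gt0; nra.
Qed.


Definition svf (f : nat -> bool) : sv n := [tuple f i | i < n].

Lemma sg_svf f j : (j < n)%N -> sg (svf f) j = f j.
Proof.
move=> hj; rewrite /sg /svf.
have -> : j = nat_of_ord (Ordinal hj) by [].
by rewrite nth_mktuple.
Qed.

Lemma sv_eq (s s' : sv n) : (forall j, (j < n)%N -> sg s j = sg s' j) -> s = s'.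
Proof.
move=> h; apply/val_inj/(@eq_from_nth _ false); first by rewrite !size_tuple.
rewrite size_tuple => j hj; exact: h j hj.
Qed.

Lemma region_uniq (s s' : sv n) x : region L p s x -> region L p s' x -> s = s'.
Proof.
move=> h h'; apply: sv_eq => j hj; have := h j hj; have := h' j hj.
rewrite /Hplus /Hminus.
by case: (sg s j); case: (sg s' j) => // a b; lra.
Qed.

Lemma sgP (s : sv n) x j : region L p s x -> (j < n)%N ->
  (Hplus L p j x -> sg s j = true) /\ (Hminus L p j x -> sg s j = false).
Proof.
move=> h hj; have := h j hj; rewrite /Hplus /Hminus.
by case: (sg s j) => a; split => // b; lra.
Qed.

Lemma sq_pos j : (j < n)%N -> 0 < E j * E j.
Proof. by move=> hj; rewrite -expr2 exprn_even_gt0 //; apply: hE. Qed.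

Lemma F1_sign (C : sv n) s0 : region L p C (onF1 p v s0) ->
  forall j, (j < n)%N -> sg C j = (t j < s0).
Proof.
rewrite onF1_Pt => h j hj; have := h j hj.
case: (sg C j).
  by rewrite HplusP // mulr0 addr0 => ->.
by rewrite HminusP // mulr0 addr0 => hl; apply/esym/negbTE; rewrite -leNgt ltW.
Qed.

Lemma meetsF1_inv (C : sv n) : meetsF1 L p v C ->
  (forall j, (j < n)%N -> sg C j = false) \/ exists2 k, (k < n)%N & C = Cc n k.
Proof.
case=> s0 h; have hs := F1_sign C s0 h.
case: (pselect (exists j, (j < n)%N /\ t j < s0))=> [ex|nex]; last first.
  left => j hj; rewrite hs //; apply/negbTE/negP => hl; apply: nex; by exists j.
right.
have exP : exists j, (fun j => (j < n)%N && (t j < s0)) j.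
  by case: ex => j [hj hl]; exists j; rewrite hj hl.
have ubP : forall i, (fun j => (j < n)%N && (t j < s0)) i -> (i <= n)%N.
  by move=> i /andP[hi _]; apply: ltnW.
case: (ex_maxnP exP ubP) => k /andP[hk hkl] hmax.
exists k => //; apply: sv_eq => j hj; rewrite hs // sgCc //.
case: (leqP j k) => hjk.
  by apply: (le_lt_trans (t_le j k hjk hk)).
apply/negbTE/negP => hl.
have := hmax j; rewrite hj hl => /(_ erefl); rewrite leqNgt hjk.
by [].
Qed.

Lemma notF0 (C : sv n) : (0 < n)%N -> sg C 0 = true -> ~ region L p C p.
Proof.
move=> hn hC h; have := h 0%N hn; rewrite hC /Hplus.
have := sq_pos 0%N hn; rewrite /E; lra.
Qed.

Lemma ch1_Cc k : (k < n)%N -> ch1 L p v (Cc n k).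
Proof.
move=> hk.
pose s0 := if (k.+1 < n)%N then (t k + t k.+1) / 2%:R else t k + 1.
have hr : region L p (Cc n k) (onF1 p v s0).
  move=> j hj; rewrite sgCc // onF1_Pt.
  case: (leqP j k) => hjk.
    rewrite HplusP // mulr0 addr0.
    have := t_le j k hjk hk.
    rewrite /s0; case: ifP => hk1; last by lra.
    have := ht2 k k.+1 (ltnSn k) hk1; lra.
  rewrite HminusP // mulr0 addr0.
  have hk1 : (k.+1 < n)%N by apply: leq_ltn_trans hj.
  have := t_le k.+1 j hjk hj.
  rewrite /s0 hk1; have := ht2 k k.+1 (ltnSn k) hk1; lra.
split; [by exists (onF1 p v s0) | by exists s0 |].
apply: notF0; first by apply: leq_ltn_trans hk.
by rewrite sgCc //; apply: leq_ltn_trans hk.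
Qed.

Lemma ch1_inv (C : sv n) : ch1 L p v C -> exists2 k, (k < n)%N & C = Cc n k.
Proof.
case=> _ hF1 hF0; case: (meetsF1_inv C hF1) => // hall.
exfalso; apply: hF0 => j hj; rewrite hall // /Hminus.
exact: sq_pos.
Qed.

Lemma par_mu k : (k.+1 < n)%N -> (parallel (L k) (L k.+1) <-> mu k = mu k.+1).
Proof.
move=> hk1; have hk : (k < n)%N by apply: ltn_trans hk1.
have tk := ht2 k k.+1 (ltnSn k) hk1.
split.
  move=> hpar; apply/eqP/negP => /negP hne; apply: hpar.
  have hd : mu k - mu k.+1 != 0 by rewrite subr_eq0.
  set y0 := (t k.+1 - t k) / (mu k - mu k.+1).
  have ey : y0 * (mu k - mu k.+1) = t k.+1 - t k by rewrite /y0 mulfVK.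
  exists (Pt (t k + mu k * y0) y0); rewrite !onHP //; split => //.
  move: ey; rewrite mulrBr => ey; lra.
move=> hmu [x [h1 h2]]; case: (decomp x) => s' [y hx].
move: h1 h2; rewrite hx !onHP // hmu; lra.
Qed.

Lemma far_chamber k : (k.+1 < n)%N -> mu k.+1 < mu k ->
  ch2 L p v (svf (fun j => (k < j)%N)).
Proof.
move=> hk1 hlt; have hk : (k < n)%N by apply: ltn_trans hk1.
have hn : (n.-1 < n)%N by rewrite prednK ?ltnSn //; apply: leq_ltn_trans hk.
set T := t n.-1.
have hd : mu k - mu k.+1 != 0 by rewrite subr_eq0 gt_eqF.
set Y := (T + 1) / (mu k - mu k.+1).
have eY : Y * (mu k - mu k.+1) = T + 1 by rewrite /Y mulfVK.
have hT : 0 < T by apply: ht3.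
have hY : 0 <= Y by rewrite /Y divr_ge0 // ?subr_ge0 ltW //; lra.
split.
  exists (Pt (T + mu k.+1 * Y + 1 / 2%:R) Y) => j hj; rewrite sg_svf //.
  case: (ltnP k j) => hkj.
    rewrite HplusP //.
    have h1 : t j <= T by apply: t_le => //; rewrite -ltnS prednK //; apply: leq_ltn_trans hk.
    have h2 : mu j <= mu k.+1.
      rewrite leq_eqVlt in hkj; case/orP: hkj => [/eqP <- //|hkj].
      exact: mu_noninc.
    have h3 : mu j * Y <= mu k.+1 * Y by apply: ler_wpM2r.
    lra.
  rewrite HminusP //.
  have h1 : mu k <= mu j.
    rewrite leq_eqVlt in hkj; case/orP: hkj => [/eqP -> //|hkj].
    exact: mu_noninc.
  have h3 : mu k * Y <= mu j * Y by apply: ler_wpM2r.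
  have := ht3 j hj; move: eY; rewrite mulrBr => eY; lra.
case/(meetsF1_inv _) => [hall|[m hm hD]].
  have := hall n.-1 hn; rewrite sg_svf //.
  by rewrite -ltnS prednK ?hk1 //; apply: leq_ltn_trans hk.
have := congr1 (fun s => sg s 0) hD => /=.
by rewrite sg_svf ?sgCc //; apply: leq_ltn_trans hk.
Qed.

Lemma norm_Pt s' y : 0 < y -> `|(Pt s' y).1| + `|(Pt s' y).2| <=
  (`|p.1| + `|p.2|) + `|s'| * (`|v.1| + `|v.2|) + y * (`|v.1| + `|v.2|).
Proof.
move=> hy; rewrite /Pt /u /=.
have e1 : `|y * (sig * v.2)| = y * `|v.2|.
  by rewrite normrM (gtr0_norm hy) normrM; case: hsig => ->; rewrite ?normr1 ?normrN1 mul1r.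
have e2 : `|y * - (sig * v.1)| = y * `|v.1|.
  by rewrite normrM (gtr0_norm hy) normrN normrM; case: hsig => ->; rewrite ?normr1 ?normrN1 mul1r.
have e3 : `|s' * v.1| = `|s'| * `|v.1| := normrM _ _.
have e4 : `|s' * v.2| = `|s'| * `|v.2| := normrM _ _.
have := ler_normD (p.1 + s' * v.1) (y * (sig * v.2)).
have := ler_normD p.1 (s' * v.1).
have := ler_normD (p.2 + s' * v.2) (y * - (sig * v.1)).
have := ler_normD p.2 (s' * v.2).
rewrite e1 e2 e3 e4; lra.
Qed.

Lemma V_gt0 : 0 < `|v.1| + `|v.2|.
Proof.
move: hv; case: v => v1 v2 /=; rewrite xpair_eqE negb_and => /orP[] h.
  have := normr_ge0 v2; have : 0 < `|v1| by rewrite normr_gt0. lra.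
have := normr_ge0 v1; have : 0 < `|v2| by rewrite normr_gt0. lra.
Qed.

Lemma U2_sign k (s : sv n) : (k.+1 < n)%N -> mu k = mu k.+1 -> isU2 L p k s ->
  ch2 L p v s /\ forall j, (j < n)%N ->
    sg s j = if mu j == mu k then (j <= k)%N else (mu j < mu k).
Proof.
move=> hk1 hmu [[x0 hx0] hin hunb hneq].
have hk : (k < n)%N by apply: ltn_trans hk1.
have tk := ht2 k k.+1 (ltnSn k) hk1.
have sk : sg s k = true.
  have := hin x0 hx0 (Pt (t k.+1) 0) (Pt (t k) 0).
  rewrite !onHP // !mulr0 !addr0 => /(_ erefl erefl) [h1 h2].
  have : Hplus L p k (Pt (t k.+1) 0) by rewrite HplusP // mulr0 addr0.
  rewrite /Hplus => hp.
  apply: (proj1 (sgP s x0 k hx0 hk)); rewrite /Hplus; nra.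
have sk1 : sg s k.+1 = false.
  have := hin x0 hx0 (Pt (t k.+1) 0) (Pt (t k) 0).
  rewrite !onHP // !mulr0 !addr0 => /(_ erefl erefl) [h1 h2].
  have : Hminus L p k.+1 (Pt (t k) 0) by rewrite HminusP // mulr0 addr0.
  rewrite /Hminus => hp.
  apply: (proj2 (sgP s x0 k.+1 hx0 hk1)); rewrite /Hminus; nra.
have strip : forall s' y, region L p s (Pt s' y) ->
    t k + mu k * y < s' /\ s' < t k.+1 + mu k * y.
  move=> s' y hr; have := hr k hk; have := hr k.+1 hk1.
  by rewrite sk sk1 HplusP // HminusP // hmu.
have ypos : forall s' y, region L p s (Pt s' y) -> 0 < y.
  move=> s' y hr; rewrite ltNge; apply/negP => hy.
  have [hs1 hs2] := strip s' y hr.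
  suff : s = Cc n k by move/eqP: hneq.
  apply: (region_uniq _ _ _ hr) => j hj; rewrite sgCc //.
  case: (leqP j k) => hjk.
    rewrite HplusP //.
    have h1 := t_le j k hjk hk.
    have h2 : mu k <= mu j.
      rewrite leq_eqVlt in hjk; case/orP: hjk => [/eqP -> //|hjk].
      exact: mu_noninc.
    have : (mu j - mu k) * y <= 0 by rewrite mulr_ge0_le0 // subr_ge0.
    rewrite mulrBl; lra.
  rewrite HminusP //.
  have h1 := t_le k.+1 j hjk hj.
  have h2 : mu j <= mu k.
    rewrite hmu; rewrite leq_eqVlt in hjk; case/orP: hjk => [/eqP <- //|hjk].
    exact: mu_noninc.
  have : (mu k - mu j) * y <= 0 by rewrite mulr_ge0_le0 // subr_ge0.
  rewrite mulrBl; lra.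
have far : forall Y, exists s' y, region L p s (Pt s' y) /\ Y <= y.
  move=> Y.
  set V := `|v.1| + `|v.2|.
  set W := V * (`|mu k| + 1).
  have hV : 0 < V := V_gt0.
  have hW : 0 < W by rewrite /W mulr_gt0 //; have := normr_ge0 (mu k); lra.
  case: (hunb (`|p.1| + `|p.2| + V * t k.+1 + W * Y)) => x [hx hM].
  case: (decomp x) => s' [y ex]; rewrite ex in hx hM.
  exists s', y; split => //.
  have hy := ypos s' y hx.
  have [hs1 hs2] := strip s' y hx.
  have hnb := norm_Pt s' y hy.
  have hsn : `|s'| <= t k.+1 + `|mu k| * y.
    have m1 : mu k * y <= `|mu k| * y by apply: ler_wpM2r; [exact: ltW|exact: ler_norm].
    have m2 : - (mu k * y) <= `|mu k| * y.
      have := ler_norm (- mu k); rewrite normrN => hn.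
      by rewrite -mulNr; apply: ler_wpM2r => //; exact: ltW.
    have htk := ht3 k hk.
    rewrite ler_norml; apply/andP; split; lra.
  have hsV : `|s'| * V <= (t k.+1 + `|mu k| * y) * V by apply: ler_wpM2r => //; exact: ltW.
  have : W * Y < W * y by move: hM hnb; rewrite /W -/V => hM hnb; lra.
  by rewrite ltr_pM2l // => /ltW.
split.
  split; first by exists x0.
  case/(meetsF1_inv _) => [hall|[m hm hD]].
    by have := hall k hk; rewrite sk.
  move: sk sk1; rewrite hD !sgCc // => hkm hmk.
  have emk : m = k by apply/eqP; rewrite eqn_leq hkm leqNgt hmk.
  by move: hneq; rewrite hD emk eqxx.
move=> j hj.
case: (eqVneq (mu j) (mu k)) => hjmu.
  case: (far 0) => s' [y [hr _]]; have [hs1 hs2] := strip s' y hr.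
  have hy := ypos s' y hr.
  case: (leqP j k) => hjk.
    apply: (proj1 (sgP s _ j hr hj)); rewrite HplusP // hjmu.
    have := t_le j k hjk hk; lra.
  apply: (proj2 (sgP s _ j hr hj)); rewrite HminusP // hjmu.
  have := t_le k.+1 j hjk hj; lra.
case: (ltgtP (mu j) (mu k)) hjmu => // hlt _.
  have hd : 0 < mu k - mu j by rewrite subr_gt0.
  case: (far ((t j + 1) / (mu k - mu j))) => s' [y [hr hY]].
  have [hs1 hs2] := strip s' y hr.
  have : (mu k - mu j) * ((t j + 1) / (mu k - mu j)) <= (mu k - mu j) * y.
    by apply: ler_wpM2l => //; exact: ltW.
  rewrite mulrC divfK ?gt_eqF // mulrBl => hh.
  apply: (proj1 (sgP s _ j hr hj)); rewrite HplusP //.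
  have := ht3 k hk; lra.
have hd : 0 < mu j - mu k by rewrite subr_gt0.
case: (far ((t k.+1 + 1) / (mu j - mu k))) => s' [y [hr hY]].
have [hs1 hs2] := strip s' y hr.
have : (mu j - mu k) * ((t k.+1 + 1) / (mu j - mu k)) <= (mu j - mu k) * y.
  by apply: ler_wpM2l => //; exact: ltW.
rewrite mulrC divfK ?gt_eqF // mulrBl => hh.
apply: (proj2 (sgP s _ j hr hj)); rewrite HminusP //.
have := ht3 j hj; lra.
Qed.

Section Ring.
Variables (R : comPzRingType) (a : nat -> R).

Lemma Cc_inj k m : (k < n)%N -> (m < n)%N -> Cc n k = Cc n m -> k = m.
Proof.
move=> hk hm e.
have h1 := congr1 (fun s => sg s k) e; have h2 := congr1 (fun s => sg s m) e.
move: h1 h2 => /=; rewrite !sgCc // !leqnn => /esym hkm hmk.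
by apply/eqP; rewrite eqn_leq hkm hmk.
Qed.

Lemma sum_pick (P : pred (sv n)) X (f : sv n -> R) :
  P X -> \sum_(C | P C) (C == X)%:R * f C = f X.
Proof.
move=> hX; rewrite (bigD1 X) //= eqxx mul1r big1 ?addr0 // => C /andP[_ hC].
by rewrite (negbTE hC) mul0r.
Qed.

Lemma nabla1E (c : sv n -> R) D : ch2 L p v D ->
  nabla1 L p v a c D = \sum_(k < n) c (Cc n k) * degk R k D * sepsum a (Cc n k) D.
Proof.
move=> hD; rewrite /nabla1 asboolT // /degC.
rewrite (eq_bigr (fun C => \sum_(k < n) (C == Cc n k)%:R * (c C * degk R k D * sepsum a C D))); last first.
  move=> C _; symmetry.
  transitivity (\sum_(k < n) (c C * ((C == Cc n k)%:R * degk R k D)) * sepsum a C D).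
    by apply: eq_bigr => k _; ring.
  by rewrite -mulr_suml -mulr_sumr.
rewrite exchange_big /=; apply: eq_bigr => k _.
rewrite -(@sum_pick (fun C => `[< ch1 L p v C >]) (Cc n k)
   (fun C => c C * degk R k D * sepsum a C D)); last by apply/asboolP; apply: ch1_Cc.
by apply: eq_bigr => C _; ring.
Qed.

Lemma nabla0_Cc x m : (m < n)%N ->
  nabla0 a x (Cc n m) = x * \sum_(j < n | (j <= m)%N) a j.
Proof.
move=> hm; rewrite /nabla0 [LHS](bigD1 (Ordinal hm)) //= eqxx mul1r.
rewrite [X in _ + X = _]big1 ?addr0 //.
move=> k hk; suff -> : (Cc n m == Cc n k) = false by rewrite mul0r.
apply/negbTE/negP => /eqP /(Cc_inj m k hm (ltn_ord k)) e.
by move: hk; rewrite -val_eqE /= e eqxx.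
Qed.

Lemma nabla0_nCc x C : (forall m, (m < n)%N -> C != Cc n m) -> nabla0 a x C = 0.
Proof.
move=> h; rewrite /nabla0 big1 // => k _.
by rewrite (negbTE (h k (ltn_ord k))) mul0r.
Qed.

Lemma U1t_Cc (r : nat -> R) m : (m < n)%N -> U1t r (Cc n m) = r m.
Proof.
move=> hm; rewrite /U1t (bigD1 (Ordinal hm)) //= /delta eqxx mulr1 big1 ?addr0 //.
move=> k hk; suff -> : (Cc n m == Cc n k) = false by rewrite mulr0.
apply/negbTE/negP => /eqP /(Cc_inj m k hm (ltn_ord k)) e.
by move: hk; rewrite -val_eqE /= e eqxx.
Qed.

Lemma U1t_nCc (r : nat -> R) C : (forall m, (m < n)%N -> C != Cc n m) -> U1t r C = 0.
Proof.
move=> h; rewrite /U1t big1 // => k _.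
by rewrite /delta (negbTE (h k (ltn_ord k))) mulr0.
Qed.

Lemma cocycle_eq (f : sv n -> R) D : cocycle1 L p v a f -> ch2 L p v D ->
  \sum_(k < n) f (Cc n k) * degk R k D * sepsum a (Cc n k) D = 0.
Proof. by case=> _ h hD; rewrite -nabla1E // h. Qed.


Lemma LemA (c : sv n -> R) k : cocycle1 L p v a c -> (k.+1 < n)%N -> mu k.+1 < mu k ->
  (\sum_(j < n) a j) * c (Cc n k) = c (Cc n n.-1) * \sum_(j < n | (j <= k)%N) a j.
Proof.
move=> hc hk1 hlt.
have hk : (k < n)%N by apply: ltn_trans hk1.
have hn0 : (0 < n)%N by apply: leq_ltn_trans hk.
have hn1 : (n.-1 < n)%N by rewrite prednK.
have hkn : (k < n.-1)%N by rewrite -ltnS prednK.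
set D := svf (fun j => (k < j)%N).
have := cocycle_eq c D hc (far_chamber k hk1 hlt).
rewrite (bigD1 (Ordinal hk)) //= (bigD1 (Ordinal hn1)) /=; last first.
  by rewrite -val_eqE /= neq_ltn hkn orbT.
rewrite big1 ?addr0; last first.
  move=> m /andP[hm1 hm2].
  have hm1' : (nat_of_ord m != k) by move: hm1; rewrite -val_eqE.
  have hm2' : (nat_of_ord m != n.-1) by move: hm2; rewrite -val_eqE.
  have hmn : (m.+1 < n)%N.
    move: (ltn_ord m) hm2'; move: (nat_of_ord m) => mm hmm hne.
    by rewrite ltn_neqAle hmm andbT; apply: contra hne => /eqP <-.
  rewrite degkE // !sg_svf // ltnS leq_eqVlt eq_sym (negbTE hm1') /= subrr.
  by rewrite mulr0 mul0r.
rewrite !degkE // (sg_svf _ _ hk1) (sg_svf _ _ hk) (sg_svf _ _ hn1) prednK // (sg_ge n D n (leqnn n)) ltnSn ltnn hkn /=.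
have -> : sepsum a (Cc n k) D = \sum_(j < n) a j.
  rewrite /sepsum; apply: eq_bigl => j; rewrite sgCc // sg_svf // ltnNge.
  by case: (j <= k)%N.
have -> : sepsum a (Cc n n.-1) D = \sum_(j < n | (j <= k)%N) a j.
  rewrite /sepsum; apply: eq_bigl => j; rewrite sgCc // sg_svf // ltnNge.
  have -> : (j <= n.-1)%N by rewrite -ltnS prednK.
  by case: (j <= k)%N.
move=> h; apply/eqP; rewrite -subr_eq0; apply/eqP; rewrite -[RHS]h; ring.
Qed.


Lemma LemB (rho : nat -> R) (f : sv n -> R) k s : cocycle1 L p v a f ->
  (forall m, (m < n)%N -> f (Cc n m) = rho m) -> (k.+1 < n)%N -> mu k = mu k.+1 ->
  isU2 L p k s -> rho n.-1 = 0 ->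
  (forall m, (m.+1 < n)%N -> mu m.+1 < mu m -> rho m = 0) ->
  rho k * sepsum a (Cc n k) s = 0.
Proof.
move=> hc hf hk1 hmu hU hr1 hrA.
have hk : (k < n)%N by apply: ltn_trans hk1.
have [hch2 hsgn] := U2_sign k s hk1 hmu hU.
have := cocycle_eq f s hc hch2.
rewrite (bigD1 (Ordinal hk)) //= big1 ?addr0; last first.
  move=> m hm1.
  have hm1' : (nat_of_ord m != k) by move: hm1; rewrite -val_eqE.
  move: (ltn_ord m) hm1'; rewrite hf //; move: (nat_of_ord m) => mm hmm hne.
  case: (eqVneq mm n.-1) => hmn; first by rewrite hmn hr1 !mul0r.
  have hm1n : (mm.+1 < n)%N.
    by rewrite ltn_neqAle hmm andbT; apply: contra hmn => /eqP <-.
  case: (ltgtP (mu mm.+1) (mu mm)) => hmu2.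
  - by rewrite hrA // !mul0r.
  - by exfalso; move: hmu2; rewrite ltNge mu_noninc.
  rewrite degkE // !hsgn // hmu2.
  case: (mu mm == mu k); last by rewrite subrr mulr0 mul0r.
  by rewrite (leq_eqVlt mm) (negbTE hne) /= subrr mulr0 mul0r.
rewrite degkE // !hsgn // -hmu !eqxx leqnn ltnn hf //= => h.
by apply/eqP; rewrite -oppr_eq0 -[X in X == _](subr0); apply/eqP; rewrite -[RHS]h; ring.
Qed.


Lemma nabla1_delta k D : (k < n)%N -> ch2 L p v D ->
  nabla1 L p v a (delta R (Cc n k)) D = degk R k D * sepsum a (Cc n k) D.
Proof.
move=> hk hD; rewrite nabla1E // (bigD1 (Ordinal hk)) //= /delta eqxx mul1r.
rewrite big1 ?addr0 // => m hm.
suff -> : (Cc n m == Cc n k) = false by rewrite !mul0r.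
apply/negbTE/negP => /eqP /(Cc_inj m k (ltn_ord m) hk) e.
by move: hm; rewrite -val_eqE /= e eqxx.
Qed.

Lemma nabla1_n2 (c : sv n -> R) D : ~ ch2 L p v D -> nabla1 L p v a c D = 0.
Proof. by move=> hD; rewrite /nabla1 asboolF. Qed.

Lemma Slast : (0 < n)%N -> \sum_(j < n | (j <= n.-1)%N) a j = \sum_(j < n) a j.
Proof. by move=> hn; apply: eq_bigl => j; rewrite -ltnS prednK // ltn_ord. Qed.

Lemma res_lt k : resonant n L p a k -> (k.+1 < n)%N.
Proof. by case=> [[]]. Qed.

End Ring.

Lemma part_welldef (R : comPzRingType) (a : nat -> R) : U1t_welldef n L p v a.
Proof.
move=> r [hr1 hr2]; split.
  move=> C hC; apply: U1t_nCc => m hm; apply/eqP => e; apply: hC; rewrite e.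
  exact: ch1_Cc.
move=> D; case: (pselect (ch2 L p v D)) => hD; last exact: nabla1_n2.
rewrite nabla1E //.
have := hr2 D; rewrite /nablat => h.
rewrite -[RHS]oppr0 -[in RHS]h -sumrN; apply: eq_bigr => k _.
by rewrite U1t_Cc // nabla1_delta // mulrN opprK mulrA.
Qed.

Lemma part_inj (R : comPzRingType) (a : nat -> R) :
  (exists b : R, b * \sum_(j < n) a j = 1) -> U1t_injective n L p v a.
Proof.
move=> [b hb] r r' [hr1 _] [hr1' _] [x hx] k.
case: (ltnP k n) => hk; last first.
  have nr : ~ resonant n L p a k by move/res_lt => h; move: (ltn_trans (ltnSn k) h); rewrite ltnNge hk.
  by rewrite hr1 // hr1'.
have hn0 : (0 < n)%N by apply: leq_ltn_trans hk.
have hn1 : (n.-1 < n)%N by rewrite prednK.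
have nr : ~ resonant n L p a n.-1 by move/res_lt; rewrite prednK // ltnn.
have hx0 : x = 0.
  have := hx (Cc n n.-1); rewrite !U1t_Cc // nabla0_Cc // Slast // hr1 // hr1' // subrr.
  move=> h; rewrite -[x]mulr1 -hb mulrCA -h mulr0 //.
have := hx (Cc n k); rewrite !U1t_Cc // nabla0_Cc // hx0 mul0r.
by move/eqP; rewrite subr_eq0 => /eqP.
Qed.

Lemma part_surj (R : comPzRingType) (a : nat -> R) :
  (exists b : R, b * \sum_(j < n) a j = 1) ->
  (forall k, (k.+1 < n)%N -> mu k = mu k.+1 -> ~ resonant n L p a k ->
     forall rho : nat -> R, (forall s, isU2 L p k s -> rho k * sepsum a (Cc n k) s = 0) ->
     rho k = 0) ->
  U1t_surjective n L p v a.
Proof.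
move=> [b hb] hH c hc; have [hcc hcn] := hc.
set x := - (b * c (Cc n n.-1)).
set rho := fun k => c (Cc n k) + x * \sum_(j < n | (j <= k)%N) a j.
set f := fun C => c C + nabla0 a x C.
have hf : cocycle1 L p v a f.
  split.
    move=> C hC; rewrite /f hcc // nabla0_nCc ?addr0 // => m hm.
    by apply/eqP => e; apply: hC; rewrite e; exact: ch1_Cc.
  move=> D; case: (pselect (ch2 L p v D)) => hD; last exact: nabla1_n2.
  rewrite nabla1E //.
  have := d2 _ _ a D; have := hcn D; rewrite nabla1E // => h1 h2.
  transitivity (\sum_(k < n) c (Cc n k) * degk R k D * sepsum a (Cc n k) D
    + x * \sum_(k < n) (\sum_(j < n | (j <= k)%N) a j) * degk R k D * sepsum a (Cc n k) D);
    last by rewrite h1 h2 mulr0 addr0.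
  rewrite mulr_sumr -big_split /=; apply: eq_bigr => k _; rewrite /f nabla0_Cc //; ring.
have hfr : forall m, (m < n)%N -> f (Cc n m) = rho m.
  by move=> m hm; rewrite /f /rho nabla0_Cc.
have rhoA : forall m, (m.+1 < n)%N -> mu m.+1 < mu m -> rho m = 0.
  move=> m hm1 hlt; have := LemA R a c m hc hm1 hlt => e.
  rewrite /rho /x.
  transitivity (c (Cc n m) - b * (c (Cc n n.-1) * \sum_(j < n | (j <= m)%N) a j)); first by ring.
  by rewrite -e mulrA hb mul1r subrr.
have rhoL : (0 < n)%N -> rho n.-1 = 0.
  move=> hn; rewrite /rho Slast // /x.
  transitivity (c (Cc n n.-1) - (b * \sum_(j < n) a j) * c (Cc n n.-1)); first by ring.
  by rewrite hb mul1r subrr.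
have key : forall k, (k < n)%N -> ~ resonant n L p a k -> rho k = 0.
  move=> k hk hnr.
  have hn0 : (0 < n)%N by apply: leq_ltn_trans hk.
  case: (eqVneq k n.-1) => hkn; first by rewrite hkn rhoL.
  have hk1 : (k.+1 < n)%N.
    by rewrite ltn_neqAle hk andbT; apply: contra hkn => /eqP <-.
  case: (ltgtP (mu k.+1) (mu k)) => hmu.
  - exact: rhoA.
  - by exfalso; move: hmu; rewrite ltNge mu_noninc.
  apply: (hH k hk1 (esym hmu) hnr rho) => s hU.
  apply: (LemB R a rho f k s hf hfr hk1 (esym hmu) hU) => //.
  exact: rhoL.
pose r := fun k => if `[< resonant n L p a k >] then rho k else 0.
have hrr : forall m, (m < n)%N -> r m = rho m.
  move=> m hm; rewrite /r; case: asboolP => // hnr.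
  by rewrite key.
exists r; split; last first.
  exists x => C.
  case: (pselect (exists2 m, (m < n)%N & C = Cc n m)) => [[m hm ->]|hno].
    by rewrite U1t_Cc // nabla0_Cc // hrr // /rho addrC addKr.
  have hno' : forall m, (m < n)%N -> C != Cc n m.
    by move=> m hm; apply/eqP => e; apply: hno; exists m.
  rewrite U1t_nCc // nabla0_nCc // hcc ?subrr // => hC.
  by apply: hno; apply: ch1_inv.
split.
  by move=> k hk; rewrite /r asboolF.
move=> D; case: (pselect (ch2 L p v D)) => hD; last first.
  by rewrite big1 // => k _; rewrite /nablat nabla1_n2 // oppr0 mulr0.
have := hcn D; rewrite nabla1E // => h1.
have h2 := d2 _ _ a D.
transitivity (- (\sum_(k < n) c (Cc n k) * degk R k D * sepsum a (Cc n k) D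
   + x * \sum_(k < n) (\sum_(j < n | (j <= k)%N) a j) * degk R k D * sepsum a (Cc n k) D)); last first.
  by rewrite h1 h2 mulr0 addr0 oppr0.
rewrite mulr_sumr -big_split -sumrN; apply: eq_bigr => k _.
rewrite /nablat nabla1_delta // hrr // /rho /=; ring.
Qed.

End Geo.

Theorem theorem4p8 (Rl : realType) (n : nat) (L : nat -> lineq Rl) (p v : pt Rl)
  (hF : adapted n L p v) :
  [/\ (* (i) *)
      (forall (R : comPzRingType) (a : nat -> R),
         (exists b : R, b * \sum_(j < n) a j = 1) ->
         U1t_welldef n L p v a /\ U1t_injective n L p v a),
      (* (ii) *)
      (forall (R : idomainType) (a : nat -> R),
         (exists b : R, b * \sum_(j < n) a j = 1) ->
         [/\ U1t_welldef n L p v a, U1t_injective n L p v a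
           & U1t_surjective n L p v a]) &
      (* (iii) *)
      (forall (R : comPzRingType) (a : nat -> R),
         (exists b : R, b * \sum_(j < n) a j = 1) ->
         (forall k, is_band n L k -> resonant n L p a k) ->
         [/\ U1t_welldef n L p v a, U1t_injective n L p v a
           & U1t_surjective n L p v a])].
Proof.
case: hF => hv _ hE [t [ht1 ht2 ht3]] hside.
have [sig [hsig hvert]] : exists sig : Rl, (sig = 1 \/ sig = -1) /\
  (forall j k x, (j < n)%N -> (k < n)%N -> j != k ->
    onH (L j) x -> onH (L k) x -> 0 < sig * gF1 p v x).
  case: hside => h.
    by exists 1; split; [left|] => // j k x hj hk hjk h1 h2; rewrite mul1r; apply: h hjk h1 h2.
  exists (-1); split; [right|] => // j k x hj hk hjk h1 h2.
  by rewrite mulN1r oppr_gt0; apply: h hjk h1 h2.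
have WD : forall (R : comPzRingType) (a : nat -> R), U1t_welldef n L p v a.
  by move=> R a; exact: (part_welldef Rl n L p v t sig hE ht1 ht2 ht3).
split.
- by move=> R a hb; split; [exact: WD | exact: part_inj].
- move=> R a hb; split; [exact: WD | exact: part_inj |].
  apply: (part_surj Rl n L p v t sig hv hE ht1 ht2 ht3 hsig hvert) => //.
  move=> k hk1 hmu hnr rho hU2.
  have hband : is_band n L k.
    by split => //; apply/(par_mu Rl n L p v t sig hv hE ht1 ht2 ht3 hsig k hk1).
  have hne : ~ (sepsum a (Cc n k) (U2 n L p k) = 0) by move=> h; apply: hnr; split.
  move: hne; rewrite /U2; case: pickP => [s /asboolP hs | _] /= hne.
    have /eqP := hU2 s hs; rewrite mulf_eq0 => /orP[/eqP //|/eqP h].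
    by exfalso; apply: hne.
  by exfalso; apply: hne; rewrite /sepsum big_pred0 // => j; rewrite eqxx.
- move=> R a hb hres; split; [exact: WD | exact: part_inj |].
  apply: (part_surj Rl n L p v t sig hv hE ht1 ht2 ht3 hsig hvert) => //.
  move=> k hk1 hmu hnr rho hU2; exfalso; apply: hnr; apply: hres.
  by split => //; apply/(par_mu Rl n L p v t sig hv hE ht1 ht2 ht3 hsig k hk1).
Qed.
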